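(* Let $\iota:\Lambda\hookrightarrow\widetilde{\Lambda}$ be a primitive isometric embedding of the $K3^{[n]}$-lattice into the Mukai lattice, $v$ a generator of $\iota(\Lambda)^\perp$, $\alpha\in\Lambda$ primitive isotropic, $\beta:=\iota(\alpha)$, and $\gamma\in\widetilde{\Lambda}$ with $(\gamma,\beta)=-1$ and $(\gamma,\gamma)=0$. Let $\Lambda_{k3}:=\beta^\perp/\mathbb{Z}\beta$ and let $h$ send an isometry of $\widetilde{\Lambda}$ fixing $\beta$ and $v$ to the induced isometry of $\Lambda_{k3}$. For $z\in\widetilde{\Lambda}$ orthogonal to $\beta$ and $v$ define $\tilde g_z(x):=x-(x,\beta)z+\left[(x,z)-\tfrac12(x,\beta)(z,z)\right]\beta$. Then $\tilde g_z$ is the unique isometry of $\widetilde{\Lambda}$ fixing $\beta$ and $v$, lying in the kernel of $h$, and sending $\gamma$ to an element congruent to $\gamma+z$ modulo $\mathbb{Z}\beta$. Moreover $\tilde g_z$ is orientation preserving.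
   Context: The Mukai lattice $\widetilde{\Lambda}$ is $E_8(-1)^{\oplus2}\oplus U^{\oplus4}$ (even unimodular of signature $(4,20)$); the $K3^{[n]}$-lattice $\Lambda$ ($n\ge2$) is $U^{\oplus3}\oplus E_8(-1)^{\oplus2}\oplus\langle2-2n\rangle$. An isometry is orientation preserving if it preserves the orientation of the positive cone $\{x\in\widetilde{\Lambda}\otimes\mathbb{R}:(x,x)>0\}$, i.e. acts trivially on its $H^2\cong\mathbb{Z}$. *)

(* Defs.v *)
(* Lattices are modelled concretely as integer row vectors
   with an explicit Gram matrix. *)
From HB Require Import structures.
From mathcomp Require Import all_boot all_order all_algebra.
From mathcomp Require Import Rstruct.
Set Implicit Arguments. Unset Strict Implicit. Unset Printing Implicit Defensive.
Import Order.TTheory GRing.Theory Num.Theory.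
Local Open Scope ring_scope.

(* Cartan matrix of E8 (Bourbaki numbering, 0-indexed); E8(-1) is its negative *)
Definition e8_edge (i j : nat) : bool :=
  [|| (i, j) == (0, 2)%N, (i, j) == (2, 3)%N, (i, j) == (3, 4)%N,
      (i, j) == (4, 5)%N, (i, j) == (5, 6)%N, (i, j) == (6, 7)%N
    | (i, j) == (1, 3)%N].
Definition e8 (i j : nat) : int :=
  if (i == j)%N then 2 else if e8_edge i j || e8_edge j i then -1 else 0.
(* hyperbolic plane U, blocks {2k, 2k+1} *)
Definition u_entry (i j : nat) : int :=
  if ((i != j) && (i./2 == j./2))%N then 1 else 0.

(* Mukai lattice  E8(-1)^2 + U^4  on Z^24 *)
Definition mukai_entry (i j : nat) : int :=
  if ((i < 8) && (j < 8))%N then - e8 i j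
  else if ((8 <= i < 16) && (8 <= j < 16))%N then - e8 (i - 8)%N (j - 8)%N
  else if ((16 <= i) && (16 <= j))%N then u_entry (i - 16)%N (j - 16)%N
  else 0.
Definition mukaiG : 'M[int]_24 := \matrix_(i, j) mukai_entry i j.

(* K3^[n] lattice  U^3 + E8(-1)^2 + <2-2n>  on Z^23 *)
Definition k3n_entry (n i j : nat) : int :=
  if ((i < 6) && (j < 6))%N then u_entry i j
  else if ((6 <= i < 14) && (6 <= j < 14))%N then - e8 (i - 6)%N (j - 6)%N
  else if ((14 <= i < 22) && (14 <= j < 22))%N then - e8 (i - 14)%N (j - 14)%N
  else if ((i == 22) && (j == 22))%N then 2%:Z - 2%:Z * n%:Z
  else 0.
Definition k3nG (n : nat) : 'M[int]_23 := \matrix_(i, j) k3n_entry n i j.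

Definition lform {m : nat} (G : 'M[int]_m) (x y : 'rV[int]_m) : int :=
  (x *m G *m y^T) 0 0.

Definition mukai := 'rV[int]_24.
Definition mform (x y : mukai) : int := lform mukaiG x y.

Definition isometric_embedding (n : nat) (iota : 'M[int]_(23, 24)) : Prop :=
  forall x y : 'rV[int]_23, mform (x *m iota) (y *m iota) = lform (k3nG n) x y.
Definition primitive_embedding (iota : 'M[int]_(23, 24)) : Prop :=
  forall (y : mukai) (k : int), k != 0 ->
    (exists x, k *: y = x *m iota) -> exists x, y = x *m iota.

Definition generates_perp (iota : 'M[int]_(23, 24)) (v : mukai) : Prop :=
  forall w : mukai, (forall x, mform w (x *m iota) = 0) <-> exists k : int, w = k *: v.

Definition primitive_vec {m : nat} (a : 'rV[int]_m) : Prop :=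
  a != 0 /\ forall (k : int) (y : 'rV[int]_m), a = k *: y -> `|k| = 1.

Definition is_isometry (g : mukai -> mukai) : Prop :=
  (forall x y, g (x + y) = g x + g y) /\ bijective g /\
  (forall x y, mform (g x) (g y) = mform x y).

(* g lies in the kernel of h : the induced isometry of beta^perp / Z beta is the identity *)
Definition in_ker_h (beta : mukai) (g : mukai -> mukai) : Prop :=
  forall x, mform x beta = 0 -> exists k : int, g x = x + k *: beta.

(* tilde g_z ; (z,z) is even so the division by 2 is exact *)
Definition gtilde (beta z : mukai) (x : mukai) : mukai :=
  x - mform x beta *: z
    + (mform x z - mform x beta * (mform z z %/ 2)%Z) *: beta.

(* matrix of an additive map (rows = images of the standard basis) *)
Definition mat_of (g : mukai -> mukai) : 'M[int]_24 :=
  \matrix_(i < 24) g (delta_mx 0 i).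

(* orientation of positive 4-planes in Mukai lattice (x) R *)
Definition pos_def {R : realFieldType} {k : nat} (P : 'M[R]_k) : Prop :=
  forall u : 'rV[R]_k, u != 0 -> 0 < (u *m P *m u^T) 0 0.
Definition orientation_preserving_over (R : realFieldType) (g : mukai -> mukai) : Prop :=
  let GR := map_mx intr mukaiG : 'M[R]_24 in
  let MR := map_mx intr (mat_of g) : 'M[R]_24 in
  forall B : 'M[R]_(4, 24), pos_def (B *m GR *m B^T) ->
    0 < \det (B *m MR *m GR *m B^T).
Definition orientation_preserving (g : mukai -> mukai) : Prop :=
  orientation_preserving_over Rdefinitions.R g.

(* Main.v *)
Require Import Defs.
From mathcomp Require Import all_boot all_order all_algebra.
From mathcomp Require Import ring lra.
Import Order.TTheory GRing.Theory Num.Theory.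
Local Open Scope ring_scope.

Lemma all_iota24 (P : nat -> nat -> bool) :
  all (fun i => all (fun j => P i j) (iota 0 24)) (iota 0 24) -> forall i j : 'I_24, P i j.
Proof.
move=> /allP H i j.
have Hi : (nat_of_ord i \in iota 0 24) by rewrite mem_iota add0n ltn_ord.
have Hj : (nat_of_ord j \in iota 0 24) by rewrite mem_iota add0n ltn_ord.
by move: (H _ Hi) => /allP; apply.
Qed.

Lemma mukaiG_tr : mukaiG^T = mukaiG.
Proof.
apply/matrixP => i j; rewrite !mxE; apply/eqP.
apply: (all_iota24 (fun i j => mukai_entry j i == mukai_entry i j)).
by vm_compute.
Qed.

Definition hM (i j : nat) : int :=
  if (i < j)%N then mukai_entry i j else if (i == j)%N then (mukai_entry i i %/ 2)%Z else 0.
Definition HM : 'M[int]_24 := \matrix_(i, j) hM i j.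

Lemma mukaiG_HM : mukaiG = HM + HM^T.
Proof.
apply/matrixP => i j; rewrite !mxE; apply/eqP.
apply: (all_iota24 (fun i j => mukai_entry i j == hM i j + hM j i)).
by vm_compute.
Qed.

Lemma scal00 (M : 'M[int]_1) : M 0 0 = M^T 0 0.
Proof. by rewrite mxE. Qed.

Lemma mform_sym x y : mform x y = mform y x.
Proof.
rewrite /mform /lform scal00 !trmx_mul trmxK mukaiG_tr mulmxA //.
Qed.

Lemma mformDl x y w : mform (x + y) w = mform x w + mform y w.
Proof. by rewrite /mform /lform !mulmxDl mxE. Qed.
Lemma mformZl k x w : mform (k *: x) w = k * mform x w.
Proof. by rewrite /mform /lform -!scalemxAl mxE. Qed.
Lemma mformNl x w : mform (- x) w = - mform x w.
Proof. by rewrite -scaleN1r mformZl mulN1r. Qed.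
Lemma mformBl x y w : mform (x - y) w = mform x w - mform y w.
Proof. by rewrite mformDl mformNl. Qed.
Lemma mformDr x y w : mform w (x + y) = mform w x + mform w y.
Proof. by rewrite mform_sym mformDl !(mform_sym w). Qed.
Lemma mformZr k x w : mform w (k *: x) = k * mform w x.
Proof. by rewrite mform_sym mformZl !(mform_sym w). Qed.
Lemma mformNr x w : mform w (- x) = - mform w x.
Proof. by rewrite mform_sym mformNl !(mform_sym w). Qed.
Lemma mformBr x y w : mform w (x - y) = mform w x - mform w y.
Proof. by rewrite mform_sym mformBl !(mform_sym w). Qed.

Lemma mform_even x : mform x x = (x *m HM *m x^T) 0 0 * 2.
Proof.
rewrite /mform /lform mukaiG_HM mulmxDr mulmxDl mxE.
have -> : (x *m HM^T *m x^T) 0 0 = (x *m HM *m x^T) 0 0.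
  by rewrite scal00 !trmx_mul !trmxK mulmxA.
ring.
Qed.

Lemma mform_half x : mform x x = (mform x x %/ 2)%Z * 2.
Proof. rewrite {2}mform_even mulzK //; exact: mform_even. Qed.

Definition hz (z : mukai) : int := (mform z z %/ 2)%Z.

Lemma gtildeE b z x : gtilde b z x = x - mform x b *: z + (mform x z - mform x b * hz z) *: b.
Proof. by []. Qed.

Lemma mform_comb_l x z b e f w :
  mform (x - e *: z + f *: b) w = mform x w - e * mform z w + f * mform b w.
Proof. by rewrite mformDl mformBl !mformZl. Qed.
Lemma mform_comb_r x z b e f w :
  mform w (x - e *: z + f *: b) = mform w x - e * mform w z + f * mform w b.
Proof. by rewrite mformDr mformBr !mformZr. Qed.

Lemma hzE z : mform z z = hz z * 2.
Proof. exact: mform_half. Qed.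

Lemma hzN z : hz (- z) = hz z.
Proof. by rewrite /hz mformNl mformNr opprK. Qed.

Lemma g_beta b z x : mform b b = 0 -> mform z b = 0 ->
  mform (gtilde b z x) b = mform x b.
Proof. move=> bb zb; rewrite gtildeE mform_comb_l bb zb; ring. Qed.

Lemma g_z b z x : mform b b = 0 -> mform z b = 0 ->
  mform (gtilde b z x) z = mform x z - 2 * mform x b * hz z.
Proof.
move=> bb zb; rewrite gtildeE mform_comb_l hzE (mform_sym b z) zb; ring.
Qed.

Lemma g_isom b z x y : mform b b = 0 -> mform z b = 0 ->
  mform (gtilde b z x) (gtilde b z y) = mform x y.
Proof.
move=> bb zb; rewrite [in LHS]gtildeE mform_comb_l.
rewrite (mform_sym x) (mform_sym z) (mform_sym b) g_beta // g_z //.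
rewrite gtildeE mform_comb_l (mform_sym y x); rewrite (mform_sym z x) (mform_sym b x); ring.
Qed.

Lemma g_add b z x y : gtilde b z (x + y) = gtilde b z x + gtilde b z y.
Proof.
rewrite !gtildeE !mformDl; apply/rowP => i; rewrite !mxE; ring.
Qed.

Lemma gK b z x : mform b b = 0 -> mform z b = 0 ->
  gtilde b (- z) (gtilde b z x) = x.
Proof.
move=> bb zb; rewrite [in LHS]gtildeE g_beta // mformNr g_z // hzN.
rewrite gtildeE; apply/rowP => i; rewrite !mxE; ring.
Qed.

Lemma g_isometry b z : mform b b = 0 -> mform z b = 0 -> is_isometry (gtilde b z).
Proof.
move=> bb zb; split; first exact: g_add.
split; last by move=> x y; exact: g_isom.
exists (gtilde b (- z)); move=> x; first exact: gK.
have nzb : mform (- z) b = 0 by rewrite mformNl zb oppr0.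
by have := gK b (- z) x bb nzb; rewrite opprK.
Qed.

Lemma add_scale (g : mukai -> mukai) : (forall x y, g (x + y) = g x + g y) ->
  forall (k : int) x, g (k *: x) = k *: g x.
Proof.
move=> gD.
have g0 : g 0 = 0 by apply: (addrI (g 0)); rewrite -gD !addr0.
have gN : forall x, g (- x) = - g x.
  by move=> x; apply/eqP; rewrite -addr_eq0 -gD addrC subrr g0.
have gn : forall (n : nat) x, g (x *+ n) = g x *+ n.
  by move=> n x; elim: n => [|n IH]; rewrite ?mulr0n ?g0 // !mulrS gD IH.
move=> k x; rewrite -[k]intz !scaler_int.
case: k => n; first by rewrite /= gn.
by rewrite NegzE !mulrNz gN /= gn.
Qed.

Lemma uniq_g b z gam (g : mukai -> mukai) :
  mform b b = 0 -> mform z b = 0 -> mform gam b = -1 -> mform gam gam = 0 ->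
  (forall x y, g (x + y) = g x + g y) ->
  (forall x y, mform (g x) (g y) = mform x y) ->
  in_ker_h b g -> (exists k : int, g gam = gam + z + k *: b) ->
  forall x, g x = gtilde b z x.
Proof.
move=> bb zb gb gg gD giso ker [k gk] x.
have gZ := @add_scale g gD.
have [a ea] : exists a, a = mform x b by eexists.
have [y ey] : exists y, y = x + a *: gam by eexists.
have yb : mform y b = 0 by rewrite ey mformDl mformZl gb -ea; ring.
have [ky gy] := ker y yb.
have ex : x = y - a *: gam by rewrite ey addrK.
have kE : k = mform gam z + hz z.
  have := giso gam gam; rewrite gk !mformDl !mformDr !mformZl !mformZr.
  rewrite gb bb zb (mform_sym b gam) gb (mform_sym b z) zb (mform_sym z gam) (hzE z) !gg.
  move=> h; lra.
have kyE : ky = mform y z.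
  have := giso y gam; rewrite gy gk !mformDl !mformDr !mformZl !mformZr.
  rewrite bb yb (mform_sym b gam) gb (mform_sym b z) zb.
  move=> h; lra.
rewrite ex gD -scaleNr gZ gy gk kyE kE gtildeE ey.
rewrite !mformDl !mformZl gb -ea.
apply/rowP => i; rewrite !mxE; ring.
Qed.

Lemma sum_foldr (F : nat -> int) n : \sum_(0 <= k < n) F k = foldr (fun k acc => F k + acc) 0 (iota 0 n).
Proof. by rewrite unlock /reducebig /index_iota subn0. Qed.

Definition tt (k i : nat) : int := if ((i == 16 + 2*k) || (i == 17 + 2*k))%N then 1 else 0.
Definition c8 (r j : nat) : int :=
  match r, j with
  | 0, 0 => 2 | 0, 2 => -1
  | 1, 1 => 2 | 1, 3 => -1
  | 2, 2 => 3 | 2, 3 => -2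
  | 3, 3 => 5 | 3, 4 => -6
  | 4, 4 => 4 | 4, 5 => -5
  | 5, 5 => 3 | 5, 6 => -4
  | 6, 6 => 2 | 6, 7 => -3
  | 7, 7 => 1
  | _, _ => 0 end.
Definition ss (m i : nat) : int :=
  if (m < 8)%N then (if (i < 8)%N then c8 m i else 0)
  else if (m < 16)%N then (if ((8 <= i) && (i < 16))%N then c8 (m - 8) (i - 8) else 0)
  else if (i == 16 + 2*(m-16))%N then 1 else if (i == 17 + 2*(m-16))%N then -1 else 0.
Definition d8 (r : nat) : int := nth 30 [:: 30; 30; 10; 2; 3; 5; 10; 30] r.
Definition dd (m : nat) : int := if (m < 16)%N then d8 (m %% 8) else 30.

Definition Tm : 'M[int]_(4,24) := \matrix_(k, i) tt k i.
Definition Sm : 'M[int]_(20,24) := \matrix_(k, i) ss k i.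
Definition Dv : 'rV[int]_20 := \row_k dd k.

Lemma key_mx : (60 : int) *: mukaiG = (30 : int) *: (Tm^T *m Tm) - Sm^T *m diag_mx Dv *m Sm.
Proof.
rewrite mul_mx_diag; apply/matrixP => i j; rewrite !mxE.
under eq_bigr do rewrite !mxE.
under [X in _ = _ - X]eq_bigr do rewrite !mxE.
rewrite -(big_mkord xpredT (fun k => tt k i * tt k j)).
rewrite -(big_mkord xpredT (fun k => ss k i * dd k * ss k j)).
rewrite !sum_foldr; apply/eqP.
apply: (all_iota24 (fun i j => 60 * mukai_entry i j ==
   30 * foldr (fun k acc => tt k i * tt k j + acc) 0 (iota 0 4)
   - foldr (fun k acc => ss k i * dd k * ss k j + acc) 0 (iota 0 20))).
by vm_compute.
Qed.

Definition GRm (R : realFieldType) : 'M[R]_24 := map_mx intr mukaiG.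
Definition qf (R : realFieldType) (x y : 'rV[R]_24) : R := (x *m GRm R *m y^T) 0 0.

Arguments qf {R}.

Lemma GRm_tr (R : realFieldType) : (GRm R)^T = GRm R.
Proof.
apply/matrixP => i j; rewrite !mxE.
by have := congr1 (fun M : 'M[int]_24 => M i j) mukaiG_tr; rewrite !mxE => ->.
Qed.

Lemma quad_diag (R : realFieldType) n (y : 'rV[R]_n) (d : 'rV[R]_n) :
  (forall j, 0 <= d 0 j) -> 0 <= (y *m diag_mx d *m y^T) 0 0.
Proof.
move=> dge; rewrite mul_mx_diag mxE; apply: sumr_ge0 => j _; rewrite !mxE.
have := dge j; nra.
Qed.

Lemma dd_ge0 : all (fun m => 0 <= dd m) (iota 0 20).
Proof. by vm_compute. Qed.

Lemma oppE (R : realFieldType) m n (M : 'M[R]_(m,n)) i j : (- M) i j = - M i j.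
Proof. by rewrite mxE. Qed.

Lemma qf_neg {R : realFieldType} (x : 'rV[R]_24) :
  x *m (map_mx intr Tm)^T = 0 -> qf x x <= 0.
Proof.
move=> xT.
have key := congr1 (map_mx (intr : int -> R)) key_mx.
rewrite map_mxZ map_mxB map_mxZ !map_mxM map_diag_mx -!map_trmx in key.
have h : ((x *m (60%:R *: GRm R)) *m x^T) 0 0 =
   ((x *m (30%:R *: ((map_mx intr Tm)^T *m map_mx intr Tm)
     - (map_mx intr Sm)^T *m diag_mx (map_mx intr Dv) *m map_mx intr Sm)) *m x^T) 0 0.
  by rewrite /GRm -key.
have e1 : ((x *m (60%:R *: GRm R)) *m x^T) 0 0 = 60 * qf x x.
  by rewrite -scalemxAr -scalemxAl mxE.
rewrite e1 mulmxBr mulmxBl -!scalemxAr -scalemxAl !mulmxA xT !mul0mx scaler0 sub0r oppE in h.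
have : 0 <= (x *m (map_mx intr Sm)^T *m diag_mx (map_mx intr Dv) *m (x *m (map_mx intr Sm)^T)^T) 0 0.
  apply: quad_diag => j; rewrite !mxE.
  have /allP := dd_ge0; move/(_ (nat_of_ord j)).
  rewrite mem_iota add0n ltn_ord => /(_ isT) hd. by rewrite ler0z.
rewrite trmx_mul trmxK !mulmxA => H; lra.
Qed.

Lemma scal1 (R : realFieldType) (t : 'rV[R]_1) (M : 'M[R]_1) : (t *m M *m t^T) 0 0 = t 0 0 ^+ 2 * M 0 0.
Proof. rewrite !mxE big_ord1 mxE big_ord1 !mxE; ring. Qed.

Lemma sig_le0 (R : realFieldType) (B : 'M[R]_(4,24)) (y : 'rV[R]_24) :
  pos_def (B *m GRm R *m B^T) -> y *m GRm R *m B^T = 0 -> qf y y <= 0.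
Proof.
move=> pd yB; rewrite leNgt; apply/negP => qpos.
pose C : 'M[R]_(4 + 1, 24) := col_mx B y.
pose TR : 'M[R]_(24, 4) := (map_mx intr Tm)^T.
pose K := kermx (C *m TR).
have nf : ~~ row_free (C *m TR).
  rewrite /row_free; apply/negP => /eqP h.
  by have := rank_leq_col (C *m TR); rewrite h.
have nz : K != 0 by rewrite /K kermx_eq0.
have : [exists i, row i K != 0].
  apply: contraR nz => /existsPn H; apply/eqP/row_matrixP => i.
  by rewrite row0; apply/eqP; have := H i; rewrite negbK.
case/existsP => i hi.
pose lam := row i K.
have lamK : lam *m (C *m TR) = 0 by rewrite /lam -row_mul mulmx_ker row0.
pose x := lam *m C.
have xT : x *m TR = 0 by rewrite /x -mulmxA.
have := qf_neg x xT; apply/negP; rewrite -ltNge.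
pose mu := lsubmx lam; pose t := rsubmx lam.
have ex : x = mu *m B + t *m y by rewrite /x -[lam]hsubmxK mul_row_col.
have yB' : B *m GRm R *m y^T = 0.
  by apply: trmx_inj; rewrite !trmx_mul trmxK GRm_tr mulmxA yB trmx0.
have c1 : mu *m B *m GRm R *m (t *m y)^T = 0.
  by rewrite trmx_mul -!mulmxA (mulmxA B) (mulmxA (B *m _)) yB' !mul0mx mulmx0.
have c2 : t *m y *m GRm R *m (mu *m B)^T = 0.
  by rewrite trmx_mul -!mulmxA (mulmxA y) (mulmxA (y *m _)) yB !mul0mx mulmx0.
have E : qf x x = (mu *m (B *m GRm R *m B^T) *m mu^T) 0 0 + t 0 0 ^+ 2 * qf y y.
  rewrite /qf ex linearD /= mulmxDl !mulmxDr !mulmxDl c1 c2 addr0 add0r mxE.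
  by rewrite -scal1 !trmx_mul !mulmxA.
rewrite E.
have [mu0|munz] := eqVneq mu 0.
  have tnz : t 0 0 != 0.
    apply: contra hi => /eqP t0; apply/eqP.
    rewrite -/lam -[lam]hsubmxK -/mu -/t mu0.
    have -> : t = 0 by apply/rowP => k; rewrite (ord1 k) t0 mxE.
    by rewrite row_mx0.
  rewrite mu0 !mul0mx mxE add0r; apply: mulr_gt0 => //.
  by rewrite exprn_even_gt0.
have := pd mu munz; nra.
Qed.

Lemma pd_det_pos (R : realFieldType) n (A : 'M[R]_n) : A^T = A -> pos_def A -> 0 < \det A.
Proof.
elim: n A => [|n IH] A0 Asym Apd; first by rewrite det_mx00.
pose A : 'M[R]_(1 + n) := A0.
have AsymA : A^T = A by exact: Asym.
have ApdA : pos_def A by exact: Apd.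
rewrite -/A; clearbody A; clear Asym Apd A0.
pose a := ulsubmx A; pose b := ursubmx A; pose c := dlsubmx A; pose D := drsubmx A.
have AE : A = block_mx a b c D by rewrite submxK.
have cb : c = b^T by rewrite /c /b trmx_ursub AsymA.
have Dsym : D^T = D by rewrite /D trmx_drsub AsymA.
pose al := a 0 0.
have aE : a = al%:M by exact: mx11_scalar.
have apos : 0 < al.
  pose u : 'rV[R]_(1 + n) := row_mx 1%:M 0.
  have unz : u != 0.
    apply/eqP => /(congr1 (fun M : 'rV[R]_(1+n) => M 0 (lshift n 0))).
    by rewrite /u row_mxEl !mxE /= => /eqP; rewrite oner_eq0.
  have := ApdA u unz.
  rewrite AE /u mul_row_block tr_row_mx mul_row_col !mul1mx !mul0mx !addr0 trmx1 mulmx1 trmx0 mulmx0 addr0.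
  by rewrite aE mxE eqxx mulr1n.
have anz : al != 0 by rewrite gt_eqF.
pose S := D - al^-1 *: (c *m b).
pose L : 'M[R]_(1 + n) := block_mx 1%:M 0 (- (al^-1 *: c)) 1%:M.
have LA : L *m A = block_mx a b 0 S.
  rewrite AE /L mulmx_block !mul1mx !mul0mx !addr0.
  congr block_mx.
    by rewrite aE mul_mx_scalar scalerN scalerA mulfV // scale1r addNr.
  by rewrite /S addrC mulNmx -scalemxAl.
have detA : \det A = al * \det S.
  have := congr1 determinant LA.
  rewrite det_mulmx det_lblock !det1 mul1r mul1r det_ublock det_mx11 => ->.
  by [].
rewrite detA; apply: mulr_gt0 => //; apply: IH.
  rewrite /S linearB /= linearZ /= trmx_mul Dsym cb trmxK //.
move=> y ynz.
pose s : 'rV[R]_1 := - (al^-1 *: (y *m c)).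
pose u : 'rV[R]_(1 + n) := row_mx s y.
have unz : u != 0.
  apply: contraNneq ynz => u0.
  by have := congr1 (@rsubmx R 1 1 n) u0; rewrite /u row_mxKr => ->; rewrite linear0.
have := ApdA u unz.
have -> : u *m A *m u^T = y *m S *m y^T.
  rewrite AE /u mul_row_block tr_row_mx mul_row_col.
  have -> : s *m a + y *m c = 0.
    by rewrite /s aE mul_mx_scalar scalerN scalerA mulfV // scale1r addNr.
  rewrite mul0mx add0r /S mulmxBr mulmxBl /s -!scalemxAr -!scalemxAl.
  rewrite mulmxDl mulNmx -scalemxAl !mulmxA.
  by rewrite mulNmx -scalemxAl addrC.
done.
Qed.

Lemma sylvester (R : comRingType) m n (X : 'M[R]_(m, n)) (Y : 'M[R]_(n, m)) :
  \det (1%:M + X *m Y) = \det (1%:M + Y *m X).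
Proof.
pose M := block_mx (1%:M : 'M[R]_m) X (- Y) (1%:M : 'M[R]_n).
have E1 : M = block_mx 1%:M 0 (- Y) 1%:M *m block_mx 1%:M X 0 (1%:M + Y *m X).
  by rewrite mulmx_block !mul1mx !mul0mx !mulmx1 !addr0 mulNmx addrCA addNr addr0.
have E2 : M = block_mx (1%:M + X *m Y) X 0 1%:M *m block_mx 1%:M 0 (- Y) 1%:M.
  by rewrite mulmx_block !mul1mx !mul0mx !mulmx1 !mulmx0 !add0r mulmxN addrK.
have := congr1 determinant E1; rewrite {1}E2 !det_mulmx !det_ublock !det_lblock !det1 !mul1r !mulr1.
by move=> ->.
Qed.

Lemma det2 (R : comRingType) (K : 'M[R]_2) : \det K = K 0 0 * K 1 1 - K 0 1 * K 1 0.
Proof.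
rewrite (expand_det_row _ 0) !big_ord_recl big_ord0 /cofactor !det_mx11 !mxE /=.
rewrite addr0 !expr0 !expr1.
have e1 : (lift ord0 ord0 : 'I_2) = 1 by apply/val_inj.
have e0 : (lift (lift ord0 ord0) ord0 : 'I_2) = 0 by apply/val_inj.
rewrite e0 e1; ring.
Qed.

Lemma mat_of_g b z : mat_of (gtilde b z) =
  1%:M - (mukaiG *m b^T) *m z + (mukaiG *m z^T - hz z *: (mukaiG *m b^T)) *m b.
Proof.
apply/row_matrixP => i; rewrite rowK rowE !mulmxDr mulmx1 mulmxN !mulmxA.
rewrite mulmxBr -scalemxAr !mulmxA gtildeE.
rewrite [delta_mx 0 i *m mukaiG *m b^T]mx11_scalar [delta_mx 0 i *m mukaiG *m z^T]mx11_scalar.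
rewrite mulmxBl -scalemxAl !mul_scalar_mx scalerA /mform /lform.
by rewrite [_ * hz z]mulrC scalerBl.
Qed.

Definition bl {R : realFieldType} {n} (M : 'M[R]_n) (s t : 'rV[R]_n) : R := (s *m M *m t^T) 0 0.

Lemma blDl (R : realFieldType) n (M : 'M[R]_n) x y w : bl M (x + y) w = bl M x w + bl M y w.
Proof. by rewrite /bl !mulmxDl mxE. Qed.
Lemma blZl (R : realFieldType) n (M : 'M[R]_n) k x w : bl M (k *: x) w = k * bl M x w.
Proof. by rewrite /bl -!scalemxAl mxE. Qed.
Lemma blNl (R : realFieldType) n (M : 'M[R]_n) x w : bl M (- x) w = - bl M x w.
Proof. by rewrite -scaleN1r blZl mulN1r. Qed.
Lemma blBl (R : realFieldType) n (M : 'M[R]_n) x y w : bl M (x - y) w = bl M x w - bl M y w.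
Proof. by rewrite blDl blNl. Qed.
Lemma blDr (R : realFieldType) n (M : 'M[R]_n) x y w : bl M w (x + y) = bl M w x + bl M w y.
Proof. by rewrite /bl linearD /= !mulmxDr mxE. Qed.
Lemma blZr (R : realFieldType) n (M : 'M[R]_n) k x w : bl M w (k *: x) = k * bl M w x.
Proof. by rewrite /bl linearZ /= -!scalemxAr mxE. Qed.
Lemma blNr (R : realFieldType) n (M : 'M[R]_n) x w : bl M w (- x) = - bl M w x.
Proof. by rewrite -scaleN1r blZr mulN1r. Qed.
Lemma blBr (R : realFieldType) n (M : 'M[R]_n) x y w : bl M w (x - y) = bl M w x - bl M w y.
Proof. by rewrite blDr blNr. Qed.
Lemma scal00R (R : realFieldType) (M : 'M[R]_1) : M 0 0 = M^T 0 0.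
Proof. by rewrite mxE. Qed.

Lemma blsym (R : realFieldType) n (M : 'M[R]_n) x y : M^T = M -> bl M x y = bl M y x.
Proof.
move=> Ms; rewrite /bl.
rewrite [LHS]scal00R.
by rewrite !trmx_mul !trmxK Ms mulmxA.
Qed.

Lemma qf_int (R : realFieldType) (x y : mukai) :
  qf (map_mx (intr : int -> R) x) (map_mx intr y) = (mform x y)%:~R.
Proof. by rewrite /qf /GRm map_trmx -!map_mxM mxE. Qed.

Lemma cs_pd (R : realFieldType) n (M : 'M[R]_n) s t :
  M^T = M -> pos_def M -> bl M s t ^+ 2 <= bl M s s * bl M t t.
Proof.
move=> Ms pd.
have [->|tnz] := eqVneq t 0.
  by rewrite /bl trmx0 mulmx0 mxE expr0n /= !mul0mx [(0 : 'M[R]_1) 0 0]mxE mulr0.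
have qt : 0 < bl M t t by exact: pd.
have h0 : forall v, 0 <= bl M v v.
  by move=> v; have [->|vnz] := eqVneq v 0; [rewrite /bl mul0mx mul0mx mxE | apply/ltW/pd].
have := h0 (bl M t t *: s - bl M s t *: t).
rewrite !(blBl, blBr, blZl, blZr) (@blsym _ _ M t s Ms) => h.
have : 0 <= bl M t t * (bl M t t * bl M s s - bl M s t ^+ 2) by nra.
rewrite pmulr_rge0 // subr_ge0; lra.
Qed.

Lemma addmx1E (R : realFieldType) n (K : 'M[R]_n) i j : (1%:M + K) i j = (i == j)%:R + K i j.
Proof. by rewrite mxE [1%:M i j]mxE. Qed.

Lemma orient (R : realFieldType) b z : mform b b = 0 -> mform z b = 0 ->
  orientation_preserving_over R (gtilde b z).
Proof.
move=> bb zb; rewrite /orientation_preserving_over /= => B pdA.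
rewrite mat_of_g map_mxD map_mxB map_mx1 !map_mxM map_mxB map_mxZ !map_mxM -!map_trmx.
rewrite -/(GRm R) in pdA *.
set G := GRm R in pdA *.
set bR := map_mx intr b; set zR := map_mx intr z; set c : R := (hz z)%:~R.
have qbb : bl G bR bR = 0 by rewrite -[bl G bR bR]/(qf bR bR) qf_int bb.
have qzb : bl G zR bR = 0 by rewrite -[bl G zR bR]/(qf zR bR) qf_int zb.
have qzz : bl G zR zR = c * 2 by rewrite -[bl G zR zR]/(qf zR zR) qf_int hzE intrM.
rewrite -[X in X *: (G *m bR^T)]/c.
have Gs : G^T = G by exact: GRm_tr.
pose A := B *m G *m B^T.
have Asym : A^T = A by rewrite /A !trmx_mul trmxK Gs mulmxA.
have detA : 0 < \det A by exact: pd_det_pos.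
have Aunit : A \in unitmx by rewrite unitmxE unitfE gt_eqF.
pose Ai := invmx A.
have Aisym : Ai^T = Ai by rewrite /Ai trmx_inv Asym.
pose uu := bR *m G *m B^T; pose ww := zR *m G *m B^T.
have uT : uu^T = B *m G *m bR^T by rewrite /uu !trmx_mul trmxK Gs mulmxA.
have wT : ww^T = B *m G *m zR^T by rewrite /ww !trmx_mul trmxK Gs mulmxA.
pose U := row_mx (ww^T - c *: uu^T) (- uu^T).
pose V := col_mx uu ww.
have E : B *m (1%:M - G *m bR^T *m zR + (G *m zR^T - c *: (G *m bR^T)) *m bR) *m G *m B^T
    = A + U *m V.
  rewrite /U /V mul_row_col uT wT /A /uu /ww.
  rewrite !(mulmxDr, mulmxDl, mulmxBr, mulmxBl, mulmxN, mulNmx) mulmx1 !mulmxA -?scalemxAl -?scalemxAr ?mulmxA -?scalemxAl ?mulmxA.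
  by rewrite [RHS]addrA addrAC.
rewrite E.
have E2 : A + U *m V = A *m (1%:M + (Ai *m U) *m V).
  by rewrite mulmxDr mulmx1 !mulmxA /Ai (mulmxV Aunit) mul1mx.
rewrite E2 det_mulmx sylvester.
apply: mulr_gt0 => //.
pose p := bl Ai uu uu; pose q := bl Ai ww ww; pose r := bl Ai uu ww.
have rs : bl Ai ww uu = r by rewrite /r blsym.
have tB : (ww - c *: uu)^T = ww^T - c *: uu^T by rewrite linearB /= linearZ.
have tN : (- uu)^T = - uu^T by rewrite linearN.
have KE : V *m (Ai *m U) = block_mx (uu *m Ai *m (ww - c *: uu)^T) (uu *m Ai *m (- uu)^T)
                          (ww *m Ai *m (ww - c *: uu)^T) (ww *m Ai *m (- uu)^T).
  by rewrite tB tN /U /V mul_mx_row mul_col_row !mulmxA.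
have i0 : (0 : 'I_(1 + 1)) = lshift 1 0 by apply/val_inj.
have i1 : (1 : 'I_(1 + 1)) = rshift 1 0 by apply/val_inj.
have K00 : (V *m (Ai *m U)) 0 0 = r - c * p.
  by rewrite KE i0 block_mxEul -/(bl Ai uu _) blBr blZr.
have K01 : (V *m (Ai *m U)) 0 1 = - p.
  by rewrite KE i0 i1 block_mxEur -/(bl Ai uu _) blNr.
have K10 : (V *m (Ai *m U)) 1 0 = q - c * r.
  by rewrite KE i0 i1 block_mxEdl -/(bl Ai ww _) blBr blZr rs.
have K11 : (V *m (Ai *m U)) 1 1 = - r.
  by rewrite KE i1 block_mxEdr -/(bl Ai ww _) blNr rs.
rewrite det2 !addmx1E K00 K01 K10 K11 /=.
pose P := fun y : 'rV[R]_24 => y - (y *m G *m B^T) *m Ai *m B.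
have PB : forall y, P y *m G *m B^T = 0.
  move=> y; rewrite /P !mulmxBl.
  have -> : (y *m G *m B^T) *m Ai *m B *m G *m B^T = (y *m G *m B^T) *m Ai *m A.
    by rewrite /A !mulmxA.
  by rewrite /Ai (mulmxKV Aunit) subrr.
have Pq : forall y1 y2, bl G (P y1) (P y2) = bl G y1 y2 - bl Ai (y1 *m G *m B^T) (y2 *m G *m B^T).
  move=> y1 y2.
  have e : B *m G *m (P y2)^T = (P y2 *m G *m B^T)^T by rewrite !trmx_mul trmxK Gs mulmxA.
  rewrite PB trmx0 in e.
  have h1 : bl G ((y1 *m G *m B^T) *m Ai *m B) (P y2) = 0.
    rewrite /bl.
    have -> : (y1 *m G *m B^T) *m Ai *m B *m G *m (P y2)^T = (y1 *m G *m B^T) *m Ai *m (B *m G *m (P y2)^T).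
      by rewrite !mulmxA.
    by rewrite e mulmx0 mxE.
  rewrite {1}/P blBl h1 subr0 /P blBr.
  by rewrite /bl !trmx_mul Aisym !mulmxA.
pose v := p *: zR - r *: bR.
have vB : v *m G *m B^T = p *: ww - r *: uu.
  by rewrite /v !mulmxBl -!scalemxAl.
have sig := sig_le0 _ B (P v) pdA (PB v).
rewrite -[qf _ _]/(bl G (P v) (P v)) Pq vB /v in sig.
rewrite !(blBl, blBr, blZl, blZr) rs -/p -/q -/r qzz qbb qzb in sig.
rewrite (@blsym _ _ G bR zR Gs) qzb in sig.
have Aipd : pos_def Ai.
  move=> s snz.
  have sAnz : s *m Ai != 0.
    apply: contraNneq snz => h.
    by rewrite -(mulmxKV Aunit s) -/Ai h mul0mx.
  have := pdA _ sAnz.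
  have -> : s *m Ai *m (B *m G *m B^T) = s by rewrite (mulmxKV Aunit).
  by rewrite trmx_mul Aisym mulmxA.
have cs := cs_pd _ _ Ai uu ww Aisym Aipd.
rewrite -/p -/q -/r in cs.
have [u0|unz] := eqVneq uu 0.
  have p0 : p = 0 by rewrite /p u0 /bl mul0mx mul0mx mxE.
  have r0 : r = 0 by rewrite /r u0 /bl mul0mx mul0mx mxE.
  rewrite p0 r0; lra.
have ppos : 0 < p by exact: Aipd.
have h : p * (c * 2 * p - p * q + r ^+ 2) <= 0 by nra.
rewrite pmulr_rle0 // in h.
nra.
Qed.

Theorem lemma5p2 (n : nat) (iota : 'M[int]_(23, 24)) (v : mukai)
    (alpha : 'rV[int]_23) (gamma z : mukai) :
  (2 <= n)%N ->
  isometric_embedding n iota -> primitive_embedding iota ->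
  generates_perp iota v ->
  primitive_vec alpha -> lform (k3nG n) alpha alpha = 0 ->
  let beta := alpha *m iota in
  mform gamma beta = -1 -> mform gamma gamma = 0 ->
  mform z beta = 0 -> mform z v = 0 ->
  (is_isometry (gtilde beta z) /\
   gtilde beta z beta = beta /\ gtilde beta z v = v /\
   in_ker_h beta (gtilde beta z) /\
   (exists k : int, gtilde beta z gamma = gamma + z + k *: beta)) /\
  (forall g : mukai -> mukai, is_isometry g -> g beta = beta -> g v = v ->
     in_ker_h beta g -> (exists k : int, g gamma = gamma + z + k *: beta) ->
     forall x, g x = gtilde beta z x) /\
  orientation_preserving (gtilde beta z).
Proof.
move=> _ iso _ gen _ aa beta gb gg zb zv.
have bb : mform beta beta = 0 by rewrite /beta iso aa.
have vb : mform v beta = 0.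
  by have [_ /(_ (ex_intro _ 1 (esym (scale1r v))))] := gen v; apply.
have vz : mform v z = 0 by rewrite mform_sym.
split; [split; [|split; [|split; [|split]]] | split].
- exact: g_isometry.
- rewrite gtildeE bb (mform_sym beta z) zb; apply/rowP => i; rewrite !mxE; ring.
- rewrite gtildeE vb vz; apply/rowP => i; rewrite !mxE; ring.
- move=> x xb; exists (mform x z); rewrite gtildeE xb; apply/rowP => i; rewrite !mxE; ring.
- exists (mform gamma z + hz z); rewrite gtildeE gb; apply/rowP => i; rewrite !mxE; ring.
- move=> g [gD [_ giso]] _ _ ker hk x; exact: (@uniq_g beta z gamma g bb zb gb gg gD giso ker hk x).
- exact: orient.
Qed.
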